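(* Let $\mathcal{G}=sl(2,\mathbb{R})$ be the real Lie algebra with basis $X_1,X_2,X_3$ and brackets $[X_1,X_2]=-X_3$, $[X_2,X_3]=X_1$, $[X_3,X_1]=X_2$ (Bianchi type $VIII$). Every real Manin triple $(\mathcal{D},\mathcal{G}',\tilde{\mathcal{G}}')$ with $\mathcal{G}'\cong\mathcal{G}$ is isomorphic to exactly one Manin triple $(\mathcal{D},\mathcal{G},\tilde{\mathcal{G}})$ in which $\tilde{\mathcal{G}}$, in the basis $\tilde X^1,\tilde X^2,\tilde X^3$ dual to $X_1,X_2,X_3$, has one of the following bracket structures: (a) (Bianchi $I$) all brackets zero; (b) (Bianchi $V$) (i) $[\tilde X^1,\tilde X^2]=-b\tilde X^2$, $[\tilde X^2,\tilde X^3]=0$, $[\tilde X^3,\tilde X^1]=b\tilde X^3$, $b>0$; (ii) $[\tilde X^1,\tilde X^2]=0$, $[\tilde X^2,\tilde X^3]=b\tilde X^2$, $[\tilde X^3,\tilde X^1]=-b\tilde X^1$, $b>0$; (iii) $[\tilde X^1,\tilde X^2]=\tilde X^2$, $[\tilde X^2,\tilde X^3]=\tilde X^2$, $[\tilde X^3,\tilde X^1]=-(\tilde X^1+\tilde X^3)$.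
   Context: A real Manin triple $(\mathcal{D},\mathcal{G},\tilde{\mathcal{G}})$ consists of a real Lie algebra $\mathcal{D}$ with a symmetric, ad-invariant, nondegenerate bilinear form $\langle\cdot,\cdot\rangle$, and two maximally isotropic Lie subalgebras $\mathcal{G},\tilde{\mathcal{G}}$ with $\mathcal{D}=\mathcal{G}\oplus\tilde{\mathcal{G}}$ as vector spaces; here $\dim\mathcal{D}=6$, $\dim\mathcal{G}=\dim\tilde{\mathcal{G}}=3$. Bases $X_i$ of $\mathcal{G}$ and $\tilde X^i$ of $\tilde{\mathcal{G}}$ are dual if $\langle X_i,X_j\rangle=0$, $\langle X_i,\tilde X^j\rangle=\delta_i^j$, $\langle\tilde X^i,\tilde X^j\rangle=0$. If $[X_i,X_j]=f_{ij}{}^kX_k$ and $[\tilde X^i,\tilde X^j]=\tilde f^{ij}{}_k\tilde X^k$, ad-invariance forces $[X_i,\tilde X^j]=f_{ki}{}^j\tilde X^k+\tilde f^{jk}{}_iX_k$, so the triple is determined by the brackets of $\mathcal{G}$ and $\tilde{\mathcal{G}}$ in dual bases. Two Manin triples are isomorphic if there is a Lie algebra isomorphism of the doubles preserving the bilinear forms and mapping first subalgebra to first subalgebra and second to second; equivalently, they are related by a change of basis $X_i'=X_kA^k{}_i$, $\tilde X'^j=(A^{-1})^j{}_k\tilde X^k$. Different values of the parameter $b$ give non-isomorphic triples. *)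

(* Defs.v *)
From HB Require Import structures.
From mathcomp Require Import all_boot all_order all_algebra.
From mathcomp Require Import reals.
Set Implicit Arguments. Unset Strict Implicit. Unset Printing Implicit Defensive.
Import Order.TTheory GRing.Theory Num.Theory.
Local Open Scope ring_scope.

(* Structure constants of a 3-dim Lie algebra in a basis e_0,e_1,e_2:
   sc i j k = f_{ij}^k, i.e. [e_i, e_j] = \sum_k sc i j k e_k. *)
Definition sconst (R : Type) := 'I_3 -> 'I_3 -> 'I_3 -> R.

Definition vec3 (R : Type) (a b c : R) (k : 'I_3) : R :=
  match val k with 0 => a | 1 => b | _ => c end.

(* Antisymmetric structure constants given [e1,e2] = u, [e2,e3] = v,
   [e3,e1] = w (u v w coordinate vectors; paper's indices 1,2,3 are 0,1,2). *)
Definition br3 (R : realType) (u v w : 'I_3 -> R) : sconst R :=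
  fun i j k =>
    match val i, val j with
    | 0, 1 => u k | 1, 0 => - u k
    | 1, 2 => v k | 2, 1 => - v k
    | 2, 0 => w k | 0, 2 => - w k
    | _, _ => 0
    end.

Definition sl2 (R : realType) : sconst R :=
  br3 (vec3 0 0 (-1)) (vec3 1 0 0) (vec3 0 1 0).

(* Basis of the double D: inl i = X_i, inr i = tilde X^i.
   Brackets: [X_i,X_j] = f_ij^k X_k, [tX^i,tX^j] = tf^ij_k tX^k,
   [X_i,tX^j] = f_ki^j tX^k + tf^jk_i X_k, [tX^j, X_i] = -[X_i, tX^j]. *)
Definition dconst (R : realType) (f tf : sconst R)
  (a b c : 'I_3 + 'I_3) : R :=
  match a, b, c with
  | inl i, inl j, inl k => f i j k
  | inl _, inl _, inr _ => 0
  | inr i, inr j, inr k => tf i j k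
  | inr _, inr _, inl _ => 0
  | inl i, inr j, inr k => f k i j
  | inl i, inr j, inl k => tf j k i
  | inr j, inl i, inr k => - f k i j
  | inr j, inl i, inl k => - tf j k i
  end.

Definition is_lie (I : finType) (R : realType) (c : I -> I -> I -> R) : Prop :=
  (forall a d, c a a d = 0) /\
  (forall a b d, c a b d = - c b a d) /\
  (forall a b g d,
     \sum_(e : I) (c a b e * c e g d + c b g e * c e a d + c g a e * c e b d)
     = 0).

Definition dform (R : realType) (a b : 'I_3 + 'I_3) : R :=
  match a, b with
  | inl i, inr j | inr i, inl j => (i == j)%:R
  | _, _ => 0
  end.

Definition ad_invariant (I : finType) (R : realType)
  (c : I -> I -> I -> R) (B : I -> I -> R) : Prop :=
  forall a b d, \sum_(e : I) c a b e * B e d = \sum_(e : I) B a e * c b d e.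

(* A real Manin triple (D, G, tG) presented in dual bases by the structure
   constants f of G and tf of tG: D with the bracket above is a Lie algebra
   and the canonical form is ad-invariant (the form is automatically
   symmetric and nondegenerate, and G, tG maximally isotropic). *)
Definition manin (R : realType) (f tf : sconst R) : Prop :=
  is_lie (dconst f tf) /\ ad_invariant (dconst f tf) (@dform R).

(* Change of basis X'_i = X_k A^k_i (A k i = A^k_i) on structure constants. *)
Definition cb (R : realType) (f : sconst R) (A : 'M[R]_3) : sconst R :=
  fun i j n => \sum_(k < 3) \sum_(l < 3) \sum_(m < 3)
                 A k i * A l j * f k l m * invmx A n m.

(* Isomorphism of Manin triples: X'_i = X_k A^k_i, tX'^j = (A^-1)^j_k tX^k. *)
Definition mt_iso (R : realType) (f1 tf1 f2 tf2 : sconst R) : Prop :=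
  exists A : 'M[R]_3, A \in unitmx /\
    cb f1 A = f2 /\ cb tf1 (invmx A)^T = tf2.

Definition lie_iso (R : realType) (f1 f2 : sconst R) : Prop :=
  exists A : 'M[R]_3, A \in unitmx /\ cb f1 A = f2.

Definition tfI (R : realType) : sconst R :=
  br3 (vec3 0 0 0) (vec3 0 0 0) (vec3 0 0 0).
Definition tfVi (R : realType) (b : R) : sconst R :=
  br3 (vec3 0 (- b) 0) (vec3 0 0 0) (vec3 0 0 b).
Definition tfVii (R : realType) (b : R) : sconst R :=
  br3 (vec3 0 0 0) (vec3 0 b 0) (vec3 (- b) 0 0).
Definition tfViii (R : realType) : sconst R :=
  br3 (vec3 0 1 0) (vec3 0 1 0) (vec3 (-1) 0 (-1)).

Definition listed (R : realType) (tf : sconst R) : Prop :=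
  tf = tfI R \/
  (exists b : R, 0 < b /\ tf = tfVi b) \/
  (exists b : R, 0 < b /\ tf = tfVii b) \/
  tf = tfViii R.

(* Main.v *)
Require Import Defs.
From mathcomp Require Import all_boot all_order all_algebra.
From mathcomp Require Import reals.
From mathcomp Require Import ring lra.
From Stdlib Require Import FunctionalExtensionality.
Import Order.TTheory GRing.Theory Num.Theory.
Local Open Scope ring_scope.
Set Implicit Arguments. Unset Strict Implicit. Unset Printing Implicit Defensive.


Lemma sum_delta_r (R : realType) (I : finType) (F : I -> R) d :
  \sum_e F e * (e == d)%:R = F d.
Proof.
rewrite (bigD1 d) //= eqxx mulr1 big1 ?addr0 // => e /negPf ->; by rewrite mulr0.
Qed.

Lemma sum_delta_l (R : realType) (I : finType) (F : I -> R) d :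
  \sum_e F e * (d == e)%:R = F d.
Proof.
rewrite (bigD1 d) //= eqxx mulr1 big1 ?addr0 // => e; rewrite eq_sym => /negPf ->; by rewrite mulr0.
Qed.

Definition cbg (R : realType) (I : finType) (c : I -> I -> I -> R) (P Q : I -> I -> R) a b n :=
  \sum_k \sum_l \sum_m P k a * P l b * c k l m * Q n m.

Lemma cbg_lin1 (R : realType) (I : finType) (c : I -> I -> I -> R) (P Q : I -> I -> R) e g d :
  cbg c P Q e g d = \sum_k P k e * (\sum_z \sum_w P z g * c k z w * Q d w).
Proof.
rewrite /cbg; apply: eq_bigr => k _; rewrite mulr_sumr; apply: eq_bigr => z _.
rewrite mulr_sumr; apply: eq_bigr => w _; ring.
Qed.

Lemma exch3 (R : realType) (I : finType) (F : I -> I -> I -> R) :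
  \sum_x \sum_y \sum_z F x y z = \sum_z \sum_x \sum_y F x y z.
Proof.
rewrite [RHS]exchange_big /=; apply: eq_bigr => x _; exact: exchange_big.
Qed.

Lemma cbg_lin2 (R : realType) (I : finType) (c : I -> I -> I -> R) (P Q : I -> I -> R) a b e :
  cbg c P Q a b e = \sum_m (\sum_x \sum_y P x a * P y b * c x y m) * Q e m.
Proof.
rewrite /cbg exch3; apply: eq_bigr => m _; rewrite mulr_suml; apply: eq_bigr => x _.
rewrite mulr_suml; apply: eq_bigr => y _; ring.
Qed.

Lemma prodsum (R : realType) (I : finType) (c : I -> I -> I -> R) (P Q : I -> I -> R)
  (PQ : forall x y, \sum_e P x e * Q e y = (x == y)%:R) a b g d :
  \sum_e cbg c P Q a b e * cbg c P Q e g d =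
  \sum_x \sum_y \sum_z \sum_w P x a * P y b * P z g * Q d w * (\sum_m c x y m * c m z w).
Proof.
transitivity (\sum_m (\sum_x \sum_y P x a * P y b * c x y m) *
                     (\sum_z \sum_w P z g * c m z w * Q d w)).
  under eq_bigr => e _ do rewrite cbg_lin2 cbg_lin1 mulr_suml.
  rewrite exchange_big /=; apply: eq_bigr => m _.
  under eq_bigr => e _ do rewrite mulr_sumr.
  rewrite exchange_big /=.
  transitivity (\sum_k (\sum_x \sum_y P x a * P y b * c x y m) *
                        (\sum_z \sum_w P z g * c k z w * Q d w) * (k == m)%:R).
    apply: eq_bigr => k _; rewrite -PQ mulr_sumr; apply: eq_bigr => e _; ring.
  by rewrite sum_delta_r.
transitivity (\sum_m \sum_x \sum_y \sum_z \sum_w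
   (P x a * P y b * P z g * Q d w * (c x y m * c m z w))).
  apply: eq_bigr => m _; rewrite mulr_suml; apply: eq_bigr => x _.
  rewrite mulr_suml; apply: eq_bigr => y _; rewrite mulr_sumr; apply: eq_bigr => z _.
  rewrite mulr_sumr; apply: eq_bigr => w _; ring.
rewrite exchange_big /=; apply: eq_bigr => x _.
rewrite exchange_big /=; apply: eq_bigr => y _.
rewrite exchange_big /=; apply: eq_bigr => z _.
rewrite exchange_big /=; apply: eq_bigr => w _.
by rewrite mulr_sumr.
Qed.

Lemma lie_cbg (R : realType) (I : finType) (c : I -> I -> I -> R) (P Q : I -> I -> R)
  (PQ : forall x y, \sum_e P x e * Q e y = (x == y)%:R) :
  is_lie c -> is_lie (cbg c P Q).
Proof.
move=> [H1 [H2 H3]].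
have anti : forall a b d, cbg c P Q a b d = - cbg c P Q b a d.
  move=> a b d; rewrite /cbg exchange_big /= -sumrN; apply: eq_bigr => l _.
  rewrite -sumrN; apply: eq_bigr => k _; rewrite -sumrN; apply: eq_bigr => m _.
  rewrite H2 !mulrN !mulNr; congr (- _); match goal with |- ?x = ?y => change (x = y :> R) end; ring.
split; [|split] => //.
  move=> a d; have := anti a a d; lra.
move=> a b g d.
rewrite !big_split /= !prodsum //.
have E2 : forall (a b g : I),
  \sum_x \sum_y \sum_z \sum_w P x b * P y g * P z a * Q d w * (\sum_m c x y m * c m z w) =
  \sum_x \sum_y \sum_z \sum_w P x a * P y b * P z g * Q d w * (\sum_m c y z m * c m x w).
  move=> a' b' g'; rewrite exch3; apply: eq_bigr => x _; apply: eq_bigr => y _.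
  apply: eq_bigr => z _; apply: eq_bigr => w _; ring.
have E3 : forall (a b g : I),
  \sum_x \sum_y \sum_z \sum_w P x g * P y a * P z b * Q d w * (\sum_m c x y m * c m z w) =
  \sum_x \sum_y \sum_z \sum_w P x a * P y b * P z g * Q d w * (\sum_m c z x m * c m y w).
  move=> a' b' g'; rewrite exch3 exch3; apply: eq_bigr => x _; apply: eq_bigr => y _.
  apply: eq_bigr => z _; apply: eq_bigr => w _; ring.
rewrite (E2 a b g) (E3 a b g).
rewrite -!big_split /=; apply: big1 => x _.
rewrite -!big_split /=; apply: big1 => y _.
rewrite -!big_split /=; apply: big1 => z _.
rewrite -!big_split /=; apply: big1 => w _.
have := H3 x y z w; rewrite !big_split /= => Hj.
transitivity (P x a * P y b * P z g * Q d w *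
  (\sum_i c x y i * c i z w + \sum_i c y z i * c i x w + \sum_i c z x i * c i y w)).
  ring.
by rewrite Hj mulr0.
Qed.


Definition i0 : 'I_3 := @Ordinal 3 0 isT.
Definition i1 : 'I_3 := @Ordinal 3 1 isT.
Definition i2 : 'I_3 := @Ordinal 3 2 isT.


Lemma sum3 (R : realType) (F : 'I_3 -> R) : \sum_(i < 3) F i = F i0 + F i1 + F i2.
Proof.
rewrite !big_ord_recr big_ord0 /=.
congr (_ + _ + _); [rewrite add0r| |]; congr (F _); exact: val_inj.
Qed.

Lemma contrR (R : realType) (A : 'M[R]_3) : A \in unitmx ->
  forall x y, \sum_e A x e * invmx A e y = (x == y)%:R.
Proof.
move=> u x y; have := congr1 (fun M : 'M[R]_3 => M x y) (mulmxV u); rewrite !mxE => ->; done.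
Qed.

Lemma contrL (R : realType) (A : 'M[R]_3) : A \in unitmx ->
  forall x y, \sum_e invmx A x e * A e y = (x == y)%:R.
Proof.
move=> u x y; have := congr1 (fun M : 'M[R]_3 => M x y) (mulVmx u); rewrite !mxE => ->; done.
Qed.

Definition blk (R : realType) (A D : 'M[R]_3) (x y : 'I_3 + 'I_3) : R :=
  match x, y with inl i, inl j => A i j | inr i, inr j => D i j | _, _ => 0 end.

Lemma blk_contr (R : realType) (A D : 'M[R]_3) : A \in unitmx -> D \in unitmx ->
  forall x y, \sum_e blk A D x e * blk (invmx A) (invmx D) e y = (x == y)%:R.
Proof.
move=> uA uD [i|i] [j|j]; rewrite big_sumType /=.
- rewrite contrR // big1 ?addr0 // => e _; by rewrite mulr0.
- by rewrite big1 ?add0r ?big1 // => e _; rewrite ?mulr0 ?mul0r.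
- by rewrite big1 ?add0r ?big1 // => e _; rewrite ?mulr0 ?mul0r.
- rewrite contrR // big1 ?add0r // => e _; by rewrite mul0r.
Qed.

Lemma cbg_nest (R : realType) (I : finType) (c : I -> I -> I -> R) (P Q : I -> I -> R) a b n :
  cbg c P Q a b n = \sum_k P k a * \sum_l P l b * \sum_m c k l m * Q n m.
Proof.
rewrite /cbg; apply: eq_bigr => k _; rewrite mulr_sumr; apply: eq_bigr => l _.
rewrite !mulr_sumr; apply: eq_bigr => m _; ring.
Qed.

Lemma sum_blk (R : realType) (G : 'I_3 + 'I_3 -> R) (A D : 'M[R]_3) a :
  \sum_k blk A D k a * G k =
  match a with inl i => \sum_k A k i * G (inl k) | inr i => \sum_k D k i * G (inr k) end.
Proof.
case: a => i; rewrite big_sumType /=.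
  by rewrite [X in _ + X]big1 ?addr0 // => k _; rewrite mul0r.
by rewrite big1 ?add0r // => k _; rewrite mul0r.
Qed.

Lemma sum_blkQ (R : realType) (G : 'I_3 + 'I_3 -> R) (A D : 'M[R]_3) n :
  \sum_m G m * blk A D n m =
  match n with inl i => \sum_m G (inl m) * A i m | inr i => \sum_m G (inr m) * D i m end.
Proof.
case: n => i; rewrite big_sumType /=.
  by rewrite [X in _ + X]big1 ?addr0 // => k _; rewrite mulr0.
by rewrite big1 ?add0r // => k _; rewrite mulr0.
Qed.

Lemma dconst_cb (R : realType) (f tf : sconst R) (A : 'M[R]_3) a b n :
  cbg (dconst f tf) (blk A (invmx A)^T) (blk (invmx A) (invmx (invmx A)^T)) a b n
  = dconst (cb f A) (cb tf (invmx A)^T) a b n.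
Proof.
have E : invmx (invmx A)^T = A^T by rewrite trmx_inv invmxK.
rewrite cbg_nest sum_blk.
case: a => a; rewrite /= sum3 !sum_blk; case: b => b; rewrite /= !sum3 !sum_blkQ;
case: n => n; rewrite /= /cb ?E; do 3 (rewrite ?sum3 /=); rewrite ?mxE; ring.
Qed.


Lemma lie_transport (R : realType) (f tf : sconst R) (A : 'M[R]_3) :
  A \in unitmx -> is_lie (dconst f tf) -> is_lie (dconst (cb f A) (cb tf (invmx A)^T)).
Proof.
move=> uA H.
have uD : (invmx A)^T \in unitmx by rewrite unitmx_tr unitmx_inv.
have := lie_cbg (blk_contr uA uD) H.
have -> : cbg (dconst f tf) (blk A (invmx A)^T) (blk (invmx A) (invmx (invmx A)^T)) =
          dconst (cb f A) (cb tf (invmx A)^T).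
  by do 3 (apply: functional_extensionality => ?); apply: dconst_cb.
done.
Qed.


Lemma sumr_mul0 (R : realType) (I : finType) (F : I -> R) : \sum_e F e * 0 = 0.
Proof. by rewrite big1 // => e _; rewrite mulr0. Qed.
Lemma sumr_0mul (R : realType) (I : finType) (F : I -> R) : \sum_e 0 * F e = 0.
Proof. by rewrite big1 // => e _; rewrite mul0r. Qed.
Lemma sum_delta_l2 (R : realType) (I : finType) (F : I -> R) d :
  \sum_e (d == e)%:R * F e = F d.
Proof. rewrite -(sum_delta_l F d); apply: eq_bigr => e _; exact: mulrC. Qed.
Lemma sum_delta_r2 (R : realType) (I : finType) (F : I -> R) d :
  \sum_e (e == d)%:R * F e = F d.
Proof. rewrite -(sum_delta_r F d); apply: eq_bigr => e _; exact: mulrC. Qed.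

Lemma adinv (R : realType) (f tf : sconst R) :
  (forall i j k, f i j k = - f j i k) -> (forall i j k, tf i j k = - tf j i k) ->
  ad_invariant (dconst f tf) (@dform R).
Proof.
move=> Hf Htf a b d.
case: a => a; case: b => b; case: d => d; rewrite !big_sumType /=
  ?sumr_mul0 ?sumr_0mul ?sum_delta_l ?sum_delta_r ?sum_delta_l2 ?sum_delta_r2 ?addr0 ?add0r.
all: first [done | by rewrite Hf ?opprK | by rewrite Htf ?opprK].
Qed.


Lemma invmxM3 (R : realType) (A B : 'M[R]_3) :
  A \in unitmx -> B \in unitmx -> invmx (A *m B) = invmx B *m invmx A.
Proof.
move=> uA uB.
have uAB : A *m B \in unitmx by rewrite unitmx_mul uA uB.
have H : (A *m B) *m (invmx B *m invmx A) = 1%:M.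
  by rewrite mulmxA -[A *m B *m invmx B]mulmxA mulmxV // mulmx1 mulmxV.
by rewrite -[invmx (A *m B)]mulmx1 -H mulmxA mulVmx // mul1mx.
Qed.

Definition intertw (R : realType) (f : sconst R) (B : 'M[R]_3) (g : sconst R) :=
  forall i j m, \sum_k \sum_l B k i * B l j * f k l m = \sum_n g i j n * B m n.

Lemma cb_intertw (R : realType) (f g : sconst R) (B : 'M[R]_3) :
  B \in unitmx -> intertw f B g -> cb f B = g.
Proof.
move=> uB H; apply: functional_extensionality => i; apply: functional_extensionality => j;
apply: functional_extensionality => n.
rewrite /cb exch3.
transitivity (\sum_m (\sum_k \sum_l B k i * B l j * f k l m) * invmx B n m).
  apply: eq_bigr => m _; rewrite mulr_suml; apply: eq_bigr => k _.
  by rewrite mulr_suml.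
under eq_bigr => m _ do rewrite H mulr_suml.
rewrite exchange_big /=.
transitivity (\sum_p g i j p * (n == p)%:R); last by rewrite sum_delta_l.
apply: eq_bigr => p _; rewrite -(contrL uB) mulr_sumr; apply: eq_bigr => m _; ring.
Qed.

Lemma intertw_cb (R : realType) (f : sconst R) (A : 'M[R]_3) :
  A \in unitmx -> intertw f A (cb f A).
Proof.
move=> uA i j m.
transitivity (\sum_p (\sum_k \sum_l A k i * A l j * f k l p) * (m == p)%:R).
  by rewrite sum_delta_l.
transitivity (\sum_p (\sum_k \sum_l A k i * A l j * f k l p) * (\sum_n A m n * invmx A n p)).
  by apply: eq_bigr => p _; rewrite contrR.
rewrite /cb; do 3 (rewrite ?sum3 /=); ring.
Qed.

Lemma intertw_comp (R : realType) (f g h : sconst R) (A B : 'M[R]_3) :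
  intertw f A g -> intertw g B h -> intertw f (A *m B) h.
Proof.
move=> HA HB i j m.
transitivity (\sum_p \sum_q B p i * B q j * (\sum_k \sum_l A k p * A l q * f k l m)).
  do 6 (rewrite ?sum3 ?mxE /=); ring.
under eq_bigr => p _ do under eq_bigr => q _ do rewrite HA.
transitivity (\sum_r A m r * (\sum_p \sum_q B p i * B q j * g p q r)).
  do 3 (rewrite ?sum3 /=); ring.
under eq_bigr => r _ do rewrite HB.
do 6 (rewrite ?sum3 ?mxE /=); ring.
Qed.

Lemma cb_comp (R : realType) (f : sconst R) (A B : 'M[R]_3) :
  A \in unitmx -> B \in unitmx -> cb (cb f A) B = cb f (A *m B).
Proof.
move=> uA uB.
have uAB : A *m B \in unitmx by rewrite unitmx_mul uA uB.
symmetry; apply: cb_intertw => //.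
exact: intertw_comp (intertw_cb f uA) (intertw_cb (cb f A) uB).
Qed.



Ltac expand := do 10 (rewrite ?sum3 ?mxE /=).

Definition adm (R : realType) (f : sconst R) (a : 'I_3) : 'M[R]_3 := \matrix_(c, d) f a c d.
Definition rad (R : realType) (tf : sconst R) (j : 'I_3) : 'M[R]_3 := \matrix_(c, d) tf c j d.
Definition tauv (R : realType) (tf : sconst R) : 'cV[R]_3 := \col_j \tr (rad tf j).
Definition Kmat (R : realType) (f : sconst R) : 'M[R]_3 :=
  \matrix_(a, b) \tr (adm f a *m adm f b).

Lemma trmx1_3 (R : realType) : (1%:M : 'M[R]_3)^T = 1%:M.
Proof. exact: trmx1. Qed.

Lemma adm_cb (R : realType) (f : sconst R) (A : 'M[R]_3) i :
  adm (cb f A) i = A^T *m (\matrix_(x, y) \sum_k A k i * f k x y) *m (invmx A)^T.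
Proof.
apply/matrixP => c d; rewrite /adm /cb !mxE.
expand.
ring.
Qed.

Lemma rad_cb (R : realType) (tf : sconst R) (D : 'M[R]_3) j :
  rad (cb tf D) j = D^T *m (\matrix_(x, y) \sum_l D l j * tf x l y) *m (invmx D)^T.
Proof.
apply/matrixP => c d; rewrite /rad /cb !mxE.
expand.
ring.
Qed.

Lemma conj_tr (R : realType) (A : 'M[R]_3) (M : 'M[R]_3) : A \in unitmx ->
  \tr (A^T *m M *m (invmx A)^T) = \tr M.
Proof.
move=> uA; rewrite mxtrace_mulC mulmxA -trmx_mul mulmxV // trmx1 mul1mx //.
Qed.

Lemma tau_cb (R : realType) (tf : sconst R) (D : 'M[R]_3) : D \in unitmx ->
  tauv (cb tf D) = D^T *m tauv tf.
Proof.
move=> uD; apply/matrixP => j z; rewrite /tauv !mxE rad_cb conj_tr //.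
rewrite /mxtrace; expand.
ring.
Qed.

Lemma K_cb (R : realType) (f : sconst R) (A : 'M[R]_3) : A \in unitmx ->
  Kmat (cb f A) = A^T *m Kmat f *m A.
Proof.
move=> uA; apply/matrixP => i j; rewrite /Kmat !mxE !adm_cb.
have -> : A^T *m (\matrix_(x, y) \sum_k A k i * f k x y) *m (invmx A)^T *m
   (A^T *m (\matrix_(x, y) \sum_k A k j * f k x y) *m (invmx A)^T) =
   A^T *m ((\matrix_(x, y) \sum_k A k i * f k x y) *m (\matrix_(x, y) \sum_k A k j * f k x y)) *m (invmx A)^T.
  by rewrite !mulmxA -[_ *m (invmx A)^T *m A^T]mulmxA -trmx_mul mulmxV // trmx1 mulmx1.
rewrite conj_tr //.
rewrite /mxtrace; expand.
Time ring.
Qed.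


Definition Qinv (R : realType) (f tf : sconst R) : 'M[R]_1 :=
  (tauv tf)^T *m Kmat f *m tauv tf.

Lemma Q_mt (R : realType) (f tf g tg : sconst R) : mt_iso f tf g tg ->
  Qinv f tf = Qinv g tg /\ (tauv tf == 0) = (tauv tg == 0).
Proof.
move=> [A [uA [<- <-]]].
have uD : (invmx A)^T \in unitmx by rewrite unitmx_tr unitmx_inv.
rewrite /Qinv tau_cb // K_cb // trmxK; split.
  rewrite trmx_mul !mulmxA -[(tauv tf)^T *m (invmx A)^T *m A^T]mulmxA -trmx_mul mulmxV //.
  rewrite trmx1 mulmx1 -[(tauv tf)^T *m Kmat f *m A *m invmx A]mulmxA mulmxV // mulmx1 //.
apply/idP/idP => /eqP H; apply/eqP.
  by rewrite H mulmx0.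
by rewrite -(mulKVmx uA (tauv tf)) H mulmx0.
Qed.

Lemma mt_trans (R : realType) (f1 tf1 f2 tf2 f3 tf3 : sconst R) :
  mt_iso f1 tf1 f2 tf2 -> mt_iso f2 tf2 f3 tf3 -> mt_iso f1 tf1 f3 tf3.
Proof.
move=> [A [uA [<- <-]]] [B [uB [<- <-]]].
have uAB : A *m B \in unitmx by rewrite unitmx_mul uA uB.
exists (A *m B); split => //; split; first by rewrite cb_comp.
rewrite invmxM3 // trmx_mul cb_comp // unitmx_tr unitmx_inv //.
Qed.


Lemma Q_Vi (R : realType) (b : R) : Qinv (sl2 R) (tfVi b) 0 0 = 8 * b ^+ 2.
Proof.
rewrite /Qinv /Kmat /tauv /rad /adm /mxtrace; expand.
rewrite /sl2 /tfVi /br3 /vec3 /i0 /i1 /i2 /=.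
ring.
Qed.


Lemma ord3P (P : 'I_3 -> Prop) : P i0 -> P i1 -> P i2 -> forall i, P i.
Proof.
move=> H0 H1 H2 [[|[|[|n]]] H] //.
- by have -> : Ordinal H = i0 by apply: val_inj.
- by have -> : Ordinal H = i1 by apply: val_inj.
- by have -> : Ordinal H = i2 by apply: val_inj.
Qed.

Definition Sfun (R : realType) (t : 'cV[R]_3) : sconst R :=
  br3 (vec3 (t i1 0 / 2) (- t i0 0 / 2) 0) (vec3 0 (t i2 0 / 2) (- t i1 0 / 2))
      (vec3 (- t i2 0 / 2) 0 (t i0 0 / 2)).

Lemma cocycle (R : realType) (tf : sconst R) :
  is_lie (dconst (sl2 R) tf) -> tf = Sfun (tauv tf).
Proof.
move=> [H1 [H2 H3]].
have D : forall i k, tf i i k = 0 by move=> i k; exact: (H1 (inr i) (inr k)).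
have As : forall i j k, tf i j k = - tf j i k by move=> i j k; exact: (H2 (inr i) (inr j) (inr k)).
have J : forall i j k l, \sum_e (dconst (sl2 R) tf (inl i) (inl j) e * dconst (sl2 R) tf e (inr k) (inl l) +
     dconst (sl2 R) tf (inl j) (inr k) e * dconst (sl2 R) tf e (inl i) (inl l) +
     dconst (sl2 R) tf (inr k) (inl i) e * dconst (sl2 R) tf e (inl j) (inl l)) = 0.
  by move=> i j k l; exact: H3.
have J1 := J i0 i1 i0 i2. have J2 := J i0 i1 i1 i2. have J3 := J i0 i2 i1 i2.
have J4 := J i0 i1 i0 i1. have J5 := J i0 i2 i0 i2. have J6 := J i1 i2 i1 i2.
move: J1 J2 J3 J4 J5 J6; rewrite !big_sumType /= !sum3 /sl2 /br3 /vec3 /=.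
rewrite !D !(As i1 i0) !(As i2 i1) !(As i0 i2) => J1 J2 J3 J4 J5 J6.
apply: functional_extensionality => i; apply: functional_extensionality => j;
apply: functional_extensionality => k.
rewrite /Sfun /tauv /rad /mxtrace.
move: i j k; apply: ord3P; apply: ord3P; apply: ord3P; rewrite !mxE !sum3 !mxE /br3 /vec3 /=;
rewrite ?D ?(As i1 i0) ?(As i2 i1) ?(As i0 i2); lra.
Qed.


Lemma lie_mt (R : realType) (f tf g tg : sconst R) :
  mt_iso f tf g tg -> is_lie (dconst f tf) -> is_lie (dconst g tg).
Proof. by move=> [A [uA [<- <-]]] H; apply: lie_transport. Qed.

Lemma step (R : realType) (tf : sconst R) (B C : 'M[R]_3) :
  B *m C = 1%:M -> intertw (sl2 R) B (sl2 R) -> is_lie (dconst (sl2 R) tf) ->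
  exists tf', [/\ mt_iso (sl2 R) tf (sl2 R) tf', is_lie (dconst (sl2 R) tf') &
                  tauv tf' = C *m tauv tf].
Proof.
move=> BC HB Hl.
have [uB uC] := mulmx1_unit BC.
have EC : invmx B = C.
  by rewrite -[invmx B]mulmx1 -BC mulmxA mulVmx // mul1mx.
have Hm : mt_iso (sl2 R) tf (sl2 R) (cb tf (invmx B)^T).
  by exists B; split => //; split => //; apply: cb_intertw.
exists (cb tf (invmx B)^T); split => //; first exact: lie_mt Hm Hl.
by rewrite tau_cb ?unitmx_tr ?unitmx_inv // trmxK EC.
Qed.

Definition mx3 (R : realType) (a b c d e f g h k : R) : 'M[R]_3 :=
  \matrix_(i, j) vec3 (vec3 a b c j) (vec3 d e f j) (vec3 g h k j) i.


Lemma mx3_mul1 (R : realType) (a b c d e f g h k a' b' c' d' e' f' g' h' k' : R) :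
  mx3 a b c d e f g h k *m mx3 a' b' c' d' e' f' g' h' k' =
  mx3 (a*a'+b*d'+c*g') (a*b'+b*e'+c*h') (a*c'+b*f'+c*k')
      (d*a'+e*d'+f*g') (d*b'+e*e'+f*h') (d*c'+e*f'+f*k')
      (g*a'+h*d'+k*g') (g*b'+h*e'+k*h') (g*c'+h*f'+k*k').
Proof.
apply/matrixP => i j; move: i j; apply: ord3P; apply: ord3P; rewrite !mxE !sum3 !mxE /= /vec3 /=; ring.
Qed.

Lemma mx3_1 (R : realType) : mx3 1 0 0 0 1 0 0 0 1 = 1%:M :> 'M[R]_3.
Proof.
apply/matrixP => i j; move: i j; apply: ord3P; apply: ord3P; rewrite !mxE /vec3 /=; done.
Qed.

Lemma mx3_col (R : realType) (a b c d e f g h k : R) (t : 'cV[R]_3) :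
  (mx3 a b c d e f g h k *m t) i0 0 = a * t i0 0 + b * t i1 0 + c * t i2 0 /\
  (mx3 a b c d e f g h k *m t) i1 0 = d * t i0 0 + e * t i1 0 + f * t i2 0 /\
  (mx3 a b c d e f g h k *m t) i2 0 = g * t i0 0 + h * t i1 0 + k * t i2 0.
Proof. by rewrite !mxE !sum3 !mxE /vec3 /=. Qed.

Lemma rot_intertw (R : realType) (c s : R) : c ^+ 2 + s ^+ 2 = 1 ->
  intertw (sl2 R) (mx3 c (-s) 0 s c 0 0 0 1) (sl2 R).
Proof.
move=> H; apply: ord3P; apply: ord3P; apply: ord3P; expand; rewrite /sl2 /br3 /vec3 /=; nra.
Qed.

Lemma boost_intertw (R : realType) (c s : R) : c ^+ 2 - s ^+ 2 = 1 ->
  intertw (sl2 R) (mx3 c 0 s 0 1 0 s 0 c) (sl2 R).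
Proof.
move=> H; apply: ord3P; apply: ord3P; apply: ord3P; expand; rewrite /sl2 /br3 /vec3 /=; nra.
Qed.

Lemma flip_intertw (R : realType) :
  intertw (sl2 R) (mx3 1 0 0 0 (-1) 0 0 0 (-1)) (sl2 R).
Proof.
apply: ord3P; apply: ord3P; apply: ord3P; expand; rewrite /sl2 /br3 /vec3 /=; ring.
Qed.

Lemma rot_BC (R : realType) (c s : R) : c ^+ 2 + s ^+ 2 = 1 ->
  mx3 c (-s) 0 s c 0 0 0 1 *m mx3 c s 0 (-s) c 0 0 0 1 = 1%:M.
Proof. move=> H; rewrite mx3_mul1 -mx3_1; congr mx3; nra. Qed.

Lemma boost_BC (R : realType) (c s : R) : c ^+ 2 - s ^+ 2 = 1 ->
  mx3 c 0 s 0 1 0 s 0 c *m mx3 c 0 (-s) 0 1 0 (-s) 0 c = 1%:M.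
Proof. move=> H; rewrite mx3_mul1 -mx3_1; congr mx3; nra. Qed.

Lemma flip_BC (R : realType) :
  mx3 1 0 0 0 (-1) 0 0 0 (-1) *m mx3 1 0 0 0 (-1) 0 0 0 (-1) = 1%:M :> 'M[R]_3.
Proof. rewrite mx3_mul1 -mx3_1; congr mx3; ring. Qed.

Lemma Sfun_I (R : realType) (t : 'cV[R]_3) :
  t i0 0 = 0 -> t i1 0 = 0 -> t i2 0 = 0 -> Sfun t = tfI R.
Proof.
move=> H0 H1 H2; apply: functional_extensionality => i; apply: functional_extensionality => j;
apply: functional_extensionality => k; move: i j k; apply: ord3P; apply: ord3P; apply: ord3P;
rewrite /Sfun /tfI /br3 /vec3 /= ?H0 ?H1 ?H2; by field.
Qed.

Lemma Sfun_Vi (R : realType) (t : 'cV[R]_3) b :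
  t i0 0 = 2 * b -> t i1 0 = 0 -> t i2 0 = 0 -> Sfun t = tfVi b.
Proof.
move=> H0 H1 H2; apply: functional_extensionality => i; apply: functional_extensionality => j;
apply: functional_extensionality => k; move: i j k; apply: ord3P; apply: ord3P; apply: ord3P;
rewrite /Sfun /tfVi /br3 /vec3 /= ?H0 ?H1 ?H2; by field.
Qed.

Lemma Sfun_Vii (R : realType) (t : 'cV[R]_3) b :
  t i0 0 = 0 -> t i1 0 = 0 -> t i2 0 = 2 * b -> Sfun t = tfVii b.
Proof.
move=> H0 H1 H2; apply: functional_extensionality => i; apply: functional_extensionality => j;
apply: functional_extensionality => k; move: i j k; apply: ord3P; apply: ord3P; apply: ord3P;
rewrite /Sfun /tfVii /br3 /vec3 /= ?H0 ?H1 ?H2; by field.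
Qed.

Lemma Sfun_Viii (R : realType) (t : 'cV[R]_3) :
  t i0 0 = -2 -> t i1 0 = 0 -> t i2 0 = 2 -> Sfun t = tfViii R.
Proof.
move=> H0 H1 H2; apply: functional_extensionality => i; apply: functional_extensionality => j;
apply: functional_extensionality => k; move: i j k; apply: ord3P; apply: ord3P; apply: ord3P;
rewrite /Sfun /tfViii /br3 /vec3 /= ?H0 ?H1 ?H2; by field.
Qed.



Definition tau_is (R : realType) (tf : sconst R) a b c :=
  [/\ tauv tf i0 0 = a, tauv tf i1 0 = b & tauv tf i2 0 = c].

Lemma cb_id (R : realType) (f : sconst R) : cb f 1%:M = f.
Proof.
apply: functional_extensionality => i; apply: functional_extensionality => j;
apply: functional_extensionality => k; move: i j k; apply: ord3P; apply: ord3P; apply: ord3P;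
rewrite /cb invmx1; expand; ring.
Qed.

Lemma mt_refl (R : realType) (f tf : sconst R) : mt_iso f tf f tf.
Proof.
exists 1%:M; split; first exact: unitmx1.
by rewrite invmx1 trmx1 !cb_id.
Qed.

Lemma stepv (R : realType) (tf : sconst R) a b c d e f g h k x y z :
  let B := mx3 a b c d e f g h k in
  forall C : 'M[R]_3, B *m C = 1%:M -> intertw (sl2 R) B (sl2 R) ->
  is_lie (dconst (sl2 R) tf) -> tau_is tf x y z ->
  forall a' b' c' d' e' f' g' h' k', C = mx3 a' b' c' d' e' f' g' h' k' ->
  exists tf', [/\ mt_iso (sl2 R) tf (sl2 R) tf', is_lie (dconst (sl2 R) tf') &
     tau_is tf' (a' * x + b' * y + c' * z) (d' * x + e' * y + f' * z) (g' * x + h' * y + k' * z)].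
Proof.
move=> B C BC HB Hl [Hx Hy Hz] a' b' c' d' e' f' g' h' k' EC.
have [tf' [M L T]] := step BC HB Hl.
exists tf'; split => //.
have [T0 [T1 T2]] := mx3_col a' b' c' d' e' f' g' h' k' (tauv tf).
by rewrite /tau_is T -EC in T0 T1 T2 *; rewrite T0 T1 T2 Hx Hy Hz.
Qed.

Lemma stage_rot (R : realType) (tf : sconst R) x y z :
  is_lie (dconst (sl2 R) tf) -> tau_is tf x y z ->
  exists tf1, [/\ mt_iso (sl2 R) tf (sl2 R) tf1, is_lie (dconst (sl2 R) tf1) &
                  tau_is tf1 (Num.sqrt (x ^+ 2 + y ^+ 2)) 0 z].
Proof.
move=> Hl Ht.
have ge0 : 0 <= x ^+ 2 + y ^+ 2 by nra.
pose rho := Num.sqrt (x ^+ 2 + y ^+ 2).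
have rho2 : rho ^+ 2 = x ^+ 2 + y ^+ 2 by rewrite sqr_sqrtr.
have [c [s [Hcs E1 E2]]] : exists c s : R,
    [/\ c ^+ 2 + s ^+ 2 = 1, c * x + s * y = rho & - s * x + c * y = 0].
  have [rz|rnz] := eqVneq rho 0.
    have hx : x = 0 by nra.
    have hy : y = 0 by nra.
    by exists 1, 0; rewrite hx hy rz; split; ring.
  exists (x / rho), (y / rho); split.
  - have -> : (x / rho) ^+ 2 + (y / rho) ^+ 2 = (x ^+ 2 + y ^+ 2) / rho ^+ 2 by field.
    by rewrite -rho2 divff // expf_neq0.
  - have -> : x / rho * x + y / rho * y = (x ^+ 2 + y ^+ 2) / rho by field.
    by rewrite -rho2 expr2 mulfK.
  - by field.
have [tf1 [M L T]] := stepv (rot_BC Hcs) (rot_intertw Hcs) Hl Ht (erefl _).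
exists tf1; split => //; case: T => T0 T1 T2; split.
- by rewrite T0 mul0r addr0.
- by rewrite T1 mul0r addr0 -E2.
- by rewrite T2 !mul0r !add0r mul1r.
Qed.

Lemma stage_flip (R : realType) (tf : sconst R) x z :
  is_lie (dconst (sl2 R) tf) -> tau_is tf x 0 z ->
  exists tf1, [/\ mt_iso (sl2 R) tf (sl2 R) tf1, is_lie (dconst (sl2 R) tf1) &
                  tau_is tf1 x 0 `|z|].
Proof.
move=> Hl Ht.
have [zp|zn] := leP 0 z.
  by exists tf; split => //; [exact: mt_refl | rewrite ger0_norm].
have [tf1 [M L T]] := stepv (flip_BC R) (flip_intertw R) Hl Ht (erefl _).
exists tf1; split => //; case: T => T0 T1 T2; split.
- by rewrite T0; ring.
- by rewrite T1; ring.
- by rewrite T2 ltr0_norm //; ring.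
Qed.

Lemma final_id (R : realType) (tf tf' : sconst R) :
  mt_iso (sl2 R) tf (sl2 R) tf' -> is_lie (dconst (sl2 R) tf') ->
  listed (Sfun (tauv tf')) -> exists tf0, listed tf0 /\ mt_iso (sl2 R) tf (sl2 R) tf0.
Proof. by move=> M L Ls; exists tf'; split => //; rewrite {1}(cocycle L). Qed.

Lemma tau_is_eq (R : realType) (tf : sconst R) a b c a' b' c' :
  tau_is tf a b c -> a = a' -> b = b' -> c = c' -> tau_is tf a' b' c'.
Proof. by move=> H <- <- <-. Qed.

Lemma listed_Vi (R : realType) (tf : sconst R) m : 0 < m ->
  tau_is tf m 0 0 -> listed (Sfun (tauv tf)).
Proof.
move=> mp [T0 T1 T2]; right; left; exists (m / 2); split; first by rewrite divr_gt0.
by apply: Sfun_Vi => //; rewrite T0; field.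
Qed.

Lemma listed_Vii (R : realType) (tf : sconst R) m : 0 < m ->
  tau_is tf 0 0 m -> listed (Sfun (tauv tf)).
Proof.
move=> mp [T0 T1 T2]; right; right; left; exists (m / 2); split; first by rewrite divr_gt0.
by apply: Sfun_Vii => //; rewrite T2; field.
Qed.

Lemma listed_Viii (R : realType) (tf : sconst R) :
  tau_is tf (-2) 0 2 -> listed (Sfun (tauv tf)).
Proof. by move=> [T0 T1 T2]; right; right; right; apply: Sfun_Viii. Qed.

Lemma stage_final (R : realType) (tf : sconst R) r z :
  0 <= r -> 0 <= z -> is_lie (dconst (sl2 R) tf) -> tau_is tf r 0 z ->
  exists tf0, listed tf0 /\ mt_iso (sl2 R) tf (sl2 R) tf0.
Proof.
move=> r0 z0 Hl Ht.
case: (ltgtP z r) => [zr|rz|e].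
- (* spacelike *)
  have d0 : 0 < r ^+ 2 - z ^+ 2.
    have : 0 < (r - z) * (r + z) by apply: mulr_gt0; lra.
    by rewrite !expr2; lra.
  pose m := Num.sqrt (r ^+ 2 - z ^+ 2).
  have m2 : m ^+ 2 = r ^+ 2 - z ^+ 2 by rewrite sqr_sqrtr // ltW.
  have mp : 0 < m by rewrite sqrtr_gt0.
  have mnz : m != 0 by rewrite gt_eqF.
  have Hb : (r / m) ^+ 2 - (z / m) ^+ 2 = 1.
    have -> : (r / m) ^+ 2 - (z / m) ^+ 2 = (r ^+ 2 - z ^+ 2) / m ^+ 2 by field.
    by rewrite -m2 divff // expf_neq0.
  have [tf1 [M L T]] := stepv (boost_BC Hb) (boost_intertw Hb) Hl Ht (erefl _).
  apply: (final_id M L); apply: (listed_Vi mp).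
  apply: (tau_is_eq T).
  + have -> : r / m * r + 0 * 0 + - (z / m) * z = (r ^+ 2 - z ^+ 2) / m by field.
    by rewrite -m2 expr2 mulfK.
  + ring.
  + by field.
- (* timelike *)
  have d1 : 0 < z ^+ 2 - r ^+ 2.
    have : 0 < (z - r) * (z + r) by apply: mulr_gt0; lra.
    by rewrite !expr2; lra.
  pose m := Num.sqrt (z ^+ 2 - r ^+ 2).
  have m2 : m ^+ 2 = z ^+ 2 - r ^+ 2 by rewrite sqr_sqrtr // ltW.
  have mp : 0 < m by rewrite sqrtr_gt0.
  have mnz : m != 0 by rewrite gt_eqF.
  have Hb : (z / m) ^+ 2 - (r / m) ^+ 2 = 1.
    have -> : (z / m) ^+ 2 - (r / m) ^+ 2 = (z ^+ 2 - r ^+ 2) / m ^+ 2 by field.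
    by rewrite -m2 divff // expf_neq0.
  have [tf1 [M L T]] := stepv (boost_BC Hb) (boost_intertw Hb) Hl Ht (erefl _).
  apply: (final_id M L); apply: (listed_Vii mp).
  apply: (tau_is_eq T).
  + by field.
  + ring.
  + have -> : - (r / m) * r + 0 * 0 + z / m * z = (z ^+ 2 - r ^+ 2) / m by field.
    by rewrite -m2 expr2 mulfK.
- (* null *)
  have [rz|rnz] := eqVneq r 0.
    apply: (final_id (mt_refl _ _) Hl); left; case: Ht => T0 T1 T2.
    by apply: Sfun_I; rewrite ?T0 ?T1 ?T2 // e.
  have Hcs : (-1) ^+ 2 + 0 ^+ 2 = 1 :> R by ring.
  have [tf1 [M1 L1 T1]] := stepv (rot_BC Hcs) (rot_intertw Hcs) Hl Ht (erefl _).
  have T1' : tau_is tf1 (- r) 0 r.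
    by apply: (tau_is_eq T1); rewrite ?e; ring.
  pose l := 2 / r.
  have lnz : l != 0 by rewrite /l mulf_neq0 // ?invr_eq0 // pnatr_eq0.
  have Hb : ((l + l^-1) / 2) ^+ 2 - ((l - l^-1) / 2) ^+ 2 = 1 by field.
  have [tf2 [M2 L2 T2]] := stepv (boost_BC Hb) (boost_intertw Hb) L1 T1' (erefl _).
  apply: (final_id (mt_trans M1 M2) L2); apply: listed_Viii.
  apply: (tau_is_eq T2); rewrite /l; by field.
Qed.

Lemma normalize (R : realType) (tf : sconst R) :
  is_lie (dconst (sl2 R) tf) -> exists tf0, listed tf0 /\ mt_iso (sl2 R) tf (sl2 R) tf0.
Proof.
move=> Hl.
have Ht : tau_is tf (tauv tf i0 0) (tauv tf i1 0) (tauv tf i2 0) by [].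
have [tf1 [M1 L1 T1]] := stage_rot Hl Ht.
have [tf2 [M2 L2 T2]] := stage_flip L1 T1.
have [tf0 [Ls M3]] := stage_final (sqrtr_ge0 _) (normr_ge0 _) L2 T2.
by exists tf0; split => //; apply: (mt_trans M1 (mt_trans M2 M3)).
Qed.



Lemma Q_Vii (R : realType) (b : R) : Qinv (sl2 R) (tfVii b) 0 0 = - (8 * b ^+ 2).
Proof.
rewrite /Qinv /Kmat /tauv /rad /adm /mxtrace; expand.
rewrite /sl2 /tfVii /br3 /vec3 /i0 /i1 /i2 /=.
ring.
Qed.

Lemma Q_Viii (R : realType) : Qinv (sl2 R) (tfViii R) 0 0 = 0.
Proof.
rewrite /Qinv /Kmat /tauv /rad /adm /mxtrace; expand.
rewrite /sl2 /tfViii /br3 /vec3 /i0 /i1 /i2 /=.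
ring.
Qed.

Lemma tau_I (R : realType) : tauv (tfI R) = 0.
Proof.
apply/matrixP => i j; move: i; apply: ord3P; rewrite /tauv /rad /mxtrace; expand;
rewrite /tfI /br3 /vec3 /=; ring.
Qed.

Lemma tau_Vi (R : realType) (b : R) : tauv (tfVi b) i0 0 = 2 * b.
Proof. rewrite /tauv /rad /mxtrace; expand; rewrite /tfVi /br3 /vec3 /=; ring. Qed.
Lemma tau_Vii (R : realType) (b : R) : tauv (tfVii b) i2 0 = 2 * b.
Proof. rewrite /tauv /rad /mxtrace; expand; rewrite /tfVii /br3 /vec3 /=; ring. Qed.
Lemma tau_Viii (R : realType) : tauv (tfViii R) i0 0 = - 2.
Proof. rewrite /tauv /rad /mxtrace; expand; rewrite /tfViii /br3 /vec3 /=; ring. Qed.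

Lemma nz_of (R : realType) (t : 'cV[R]_3) i : t i 0 != 0 -> (t == 0) = false.
Proof. by move=> H; apply/negbTE; apply: contra H => /eqP ->; rewrite mxE. Qed.

Lemma sq_inj (R : realType) (b b' : R) : 0 < b -> 0 < b' -> 8 * b ^+ 2 = 8 * b' ^+ 2 -> b = b'.
Proof. move=> bp bp' H; nra. Qed.
Lemma sq_inj' (R : realType) (b b' : R) : 0 < b -> 0 < b' -> - (8 * b ^+ 2) = - (8 * b' ^+ 2) -> b = b'.
Proof. move=> bp bp' H; nra. Qed.
Lemma sq_c1 (R : realType) (b b' : R) : 0 < b -> 0 < b' -> 8 * b ^+ 2 = - (8 * b' ^+ 2) -> False.
Proof. move=> bp bp' H; nra. Qed.
Lemma sq_c1' (R : realType) (b b' : R) : 0 < b -> 0 < b' -> - (8 * b ^+ 2) = 8 * b' ^+ 2 -> False.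
Proof. move=> bp bp' H; nra. Qed.
Lemma sq_c2 (R : realType) (b : R) : 0 < b -> 8 * b ^+ 2 = 0 -> False.
Proof. move=> bp H; nra. Qed.
Lemma sq_c2' (R : realType) (b : R) : 0 < b -> - (8 * b ^+ 2) = 0 -> False.
Proof. move=> bp H; nra. Qed.
Lemma sq_c3 (R : realType) (b : R) : 0 < b -> 0 = 8 * b ^+ 2 -> False.
Proof. move=> bp H; nra. Qed.
Lemma sq_c3' (R : realType) (b : R) : 0 < b -> 0 = - (8 * b ^+ 2) -> False.
Proof. move=> bp H; nra. Qed.

Lemma listed_inv (R : realType) (t : sconst R) : listed t ->
  [\/ t = tfI R /\ (Qinv (sl2 R) t 0 0 = 0 /\ (tauv t == 0) = true),
      exists2 b : R, 0 < b & t = tfVi b /\ (Qinv (sl2 R) t 0 0 = 8 * b ^+ 2 /\ (tauv t == 0) = false),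
      exists2 b : R, 0 < b & t = tfVii b /\ (Qinv (sl2 R) t 0 0 = - (8 * b ^+ 2) /\ (tauv t == 0) = false) |
      t = tfViii R /\ (Qinv (sl2 R) t 0 0 = 0 /\ (tauv t == 0) = false)].
Proof.
case => [E|[[b [bp E]]|[[b [bp E]]| E]]].
- apply: Or41; split => //; rewrite E; split.
    by rewrite /Qinv tau_I mulmx0 mxE.
  by rewrite tau_I eqxx.
- apply: Or42; exists b => //; split => //; rewrite E; split; first exact: Q_Vi.
  by apply: (@nz_of _ _ i0); rewrite tau_Vi mulf_neq0 // ?gt_eqF.
- apply: Or43; exists b => //; split => //; rewrite E; split; first exact: Q_Vii.
  by apply: (@nz_of _ _ i2); rewrite tau_Vii mulf_neq0 // ?gt_eqF.
- apply: Or44; split => //; rewrite E; split; first exact: Q_Viii.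
  by apply: (@nz_of _ _ i0); rewrite tau_Viii oppr_eq0 ?pnatr_eq0.
Qed.

Lemma uniq_listed (R : realType) (t0 t1 : sconst R) :
  listed t0 -> listed t1 -> Qinv (sl2 R) t0 = Qinv (sl2 R) t1 ->
  (tauv t0 == 0) = (tauv t1 == 0) -> t0 = t1.
Proof.
move=> L0 L1 /(congr1 (fun M : 'M[R]_1 => M 0 0)) Q Z; move: Q Z.
case: (listed_inv L0) => [[E0 [Q0 Z0]]|[b bp [E0 [Q0 Z0]]]|[b bp [E0 [Q0 Z0]]]|[E0 [Q0 Z0]]];
case: (listed_inv L1) => [[E1 [Q1 Z1]]|[b' bp' [E1 [Q1 Z1]]]|[b' bp' [E1 [Q1 Z1]]]|[E1 [Q1 Z1]]];
rewrite Q0 Q1 Z0 Z1 E0 E1 => Q Z //.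
all: first [ by rewrite (sq_inj bp bp' Q) | by rewrite (sq_inj' bp bp' Q)
  | by case: (sq_c1 bp bp' Q) | by case: (sq_c1' bp bp' Q)
  | by case: (sq_c2 bp Q) | by case: (sq_c2' bp Q) | by case: (sq_c3 bp' Q) | by case: (sq_c3' bp' Q) ].
Qed.

Unset Implicit Arguments.

Theorem mainTheorem2 (R : realType) (f tf : sconst R) :
  manin f tf -> lie_iso f (sl2 R) ->
  exists tf0 : sconst R,
    [/\ listed tf0, manin (sl2 R) tf0, mt_iso f tf (sl2 R) tf0 &
        forall tf1 : sconst R, listed tf1 -> mt_iso f tf (sl2 R) tf1 ->
          tf1 = tf0].
Proof.
move=> [Hl Hinv] [A0 [uA0 EA0]].
have M0 : mt_iso f tf (sl2 R) (cb tf (invmx A0)^T) by exists A0.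
have [tf0 [Ls M1]] := normalize (lie_mt M0 Hl).
have M := mt_trans M0 M1.
have L := lie_mt M Hl.
exists tf0; split => //.
- split => //; apply: adinv.
  + by move=> i j k; exact: (L.2.1 (inl i) (inl j) (inl k)).
  + by move=> i j k; exact: (L.2.1 (inr i) (inr j) (inr k)).
- move=> tf1 Ls1 M1'.
  have [Q0 Z0] := Q_mt M; have [Q1 Z1] := Q_mt M1'.
  apply: uniq_listed => //; [by rewrite -Q0 -Q1 | by rewrite -Z0 -Z1].
Qed.
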